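(* Let $s,k$ be positive integers with $s>2\cdot10^6$, and let $n=\lceil 3e(s+1)k\rceil$. Let $\mathcal F\subset\binom{[n]}{k}$ be a nonempty shifted family and let $$\beta:=\min_{F\in\mathcal F}\ \max_{\ell\in[n]}\frac{|F\cap[\ell]|}{\ell},$$ i.e. $\beta$ is the largest rational number such that for every $F\in\mathcal F$ there is $\ell$ with $|F\cap[\ell]|\ge\beta\ell$. If $\beta>\frac{4}{3(s+1)}$, then $|\mathcal F|<\binom{n}{k}-\binom{n-s}{k}$.
   Context: $[n]=\{1,\ldots,n\}$; $\binom{X}{k}$ is the family of all $k$-subsets of $X$. A family $\mathcal F\subset\binom{[n]}{k}$ is shifted if whenever $A\in\mathcal F$ and $B$ is obtained from $A$ by replacing some elements with smaller elements, then $B\in\mathcal F$. Note $\binom{n}{k}-\binom{n-s}{k}$ is the number of $k$-subsets of $[n]$ meeting $[s]$. *)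

(* Defs.v *)
From Stdlib Require Import Reals.
From mathcomp Require Import all_boot all_order all_algebra.
Set Implicit Arguments. Unset Strict Implicit. Unset Printing Implicit Defensive.
Import Order.TTheory GRing.Theory Num.Theory.

(* Convention: the ground set [n] = {1,...,n} is represented by 'I_n,
   the ordinal i standing for the integer i+1.  Hence [l] = {1,..,l}
   corresponds to [set i : 'I_n | i < l]. *)

Definition replaced_by_smaller (n : nat) (A B : {set 'I_n}) : Prop :=
  exists f : 'I_n -> 'I_n,
    [/\ {in A &, injective f}, (forall a, a \in A -> f a <= a) & B = f @: A].

Definition shifted (n : nat) (F : {set {set 'I_n}}) : Prop :=
  forall A B, A \in F -> replaced_by_smaller A B -> B \in F.

(* |A ∩ [l+1]| / (l+1), for l : 'I_n (so l+1 ranges over [n]). *)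
Local Open Scope ring_scope.

Definition ratio (n : nat) (A : {set 'I_n}) (l : 'I_n) : rat :=
  (#|[set i in A | (i <= l)%N]|)%:R / (l.+1)%:R.

(* max over l in [n] of |A ∩ [l]| / l  (all ratios are >= 0). *)
Definition maxratio (n : nat) (A : {set 'I_n}) : rat :=
  \big[Num.max/0]_(l < n) ratio A l.

(* beta(F) = min over A in F of maxratio A; all values are <= 1, so the
   default value 1 is irrelevant for nonempty F. *)
Definition beta (n : nat) (F : {set {set 'I_n}}) : rat :=
  \big[Num.min/1]_(A in F) maxratio A.

(* Main.v *)
Require Import Defs.
From Stdlib Require Import Reals.
From mathcomp Require Import all_boot all_order all_algebra.
From Stdlib Require Import Lra.

Section RealPart.
Local Open Scope R_scope.
Lemma n_big (s k n : nat) :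
  Rle (Rmult (Rmult (Rmult (INR 3) (exp (INR 1))) (INR (s + 1))) (INR k)) (INR n) ->
  (0 < k)%N -> (6 * (s + 1) * k < n)%N.
Proof.
move=> H kp.
have e2 : 2 < exp 1 by have := exp_ineq1 1 R1_neq_R0; lra.
have hk : 0 < INR k by apply: lt_0_INR; apply/ltP.
have hs : 0 < INR (s+1) by apply: lt_0_INR; apply/ltP; rewrite addn1.
apply/ltP; apply: INR_lt.
rewrite !mult_INR.
change (INR 1) with 1 in H.
have h3 : INR 3 = 3 by rewrite /=; lra.
rewrite h3 in H.
have : 6 * INR (s+1) * INR k < 3 * exp 1 * INR (s+1) * INR k.
  apply Rmult_lt_compat_r => //. apply Rmult_lt_compat_r => //. lra.
have -> : INR 6 = 6 by simpl; lra.
lra.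
Qed.
End RealPart.

From mathcomp Require Import zify ring lra.
Set Implicit Arguments. Unset Strict Implicit. Unset Printing Implicit Defensive.
Import Order.TTheory GRing.Theory Num.Theory.

Section Numeric.
Lemma bern_nat a N : a ^ N.+1 + N.+1 * a ^ N <= a.+1 ^ N.+1.
Proof.
elim: N => [|N IH]; first by rewrite expn1 expn0 muln1 expn1 addn1.
have e1 : a.+1 ^ N.+2 = a.+1 * a.+1 ^ N.+1 by rewrite expnS.
have e2 : a ^ N.+2 = a * (a * a ^ N) by rewrite !expnS.
have e3 : a ^ N.+1 = a * a ^ N by rewrite expnS.
rewrite e1 e2 e3; rewrite e3 in IH.
set Z := a ^ N in IH *; set Y := a.+1 ^ N.+1 in IH *.
nia.
Qed.

Lemma key_step m : (m.+2) ^ m.+2 * m ^ m.+1 <= (m.+1) ^ (m.+1 + m.+2).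
Proof.
have h := bern_nat (m * m.+2) m.
have e1 : (m * m.+2).+1 = m.+1 ^ 2 by rewrite -mulnn; nia.
rewrite e1 -expnM in h.
have -> : m.+1 ^ (m.+1 + m.+2) = m.+1 * m.+1 ^ (2 * m.+1).
  by rewrite -expnS; congr (_ ^ _); lia.
rewrite !expnMn in h.
have -> : m.+2 ^ m.+2 * m ^ m.+1 = (m ^ m * m.+2 ^ m) * (m * m.+2 * m.+2).
  by rewrite !expnS; ring.
rewrite (expnS m m) (expnS m.+2 m) in h.
set A := m ^ m in h *; set B := m.+2 ^ m in h *; set C := m.+1 ^ (2 * m.+1) in h *.
nia.
Qed.

Lemma pow_ratio m : 0 < m -> (m.+1) ^ m.+1 <= 4 * m ^ m.+1.
Proof.
elim: m => [//|m IH].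
case: m IH => [_ _|m IH _]; first by [].
have h := key_step m.+1.
have IH' := IH isT.
have pos : 0 < m.+1 ^ m.+2 by rewrite expn_gt0.
rewrite expnD in h.
set X := m.+3 ^ m.+3 in h *; set Y := m.+1 ^ m.+2 in h IH' pos *;
set P := m.+2 ^ m.+2 in h IH' *; set Q := m.+2 ^ m.+3 in h *.
have h3 : X * Y <= (4 * Q) * Y by apply: leq_trans h _; nia.
by rewrite leq_pmul2r in h3.
Qed.

Lemma bin_down_nat M k j : k <= M -> j < k ->
  M * 'C(M - j.+1, k - j.+1) <= k * 'C(M - j, k - j).
Proof.
move=> kM jk.
have h := mul_bin_diag (M - j) (k - j.+1).
have e1 : (M - j).-1 = M - j.+1 by lia.
have e2 : (k - j.+1).+1 = k - j by lia.
rewrite e1 e2 in h.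
set C1 := 'C(M - j.+1, k - j.+1) in h *; set C0 := 'C(M - j, k - j) in h *.
have pos : 0 < M - j by lia.
rewrite -(leq_pmul2l pos).
have -> : (M - j) * (M * C1) = M * ((M - j) * C1) by ring.
rewrite h.
have hh : M * (k - j) <= (M - j) * k by nia.
by rewrite !mulnA; apply: leq_mul.
Qed.


Local Open Scope ring_scope.

Definition g (c x : rat) (j : nat) : rat :=
  (((j - 1)%N%:R * c) ^+ j / (j`!)%:R) * x ^+ (j - 1).

Lemma g_ge0 c x j : 0 <= c -> 0 <= x -> 0 <= g c x j.
Proof.
move=> c0 x0; rewrite /g mulr_ge0 // ?exprn_ge0 // divr_ge0 // exprn_ge0 //.
by rewrite mulr_ge0.
Qed.

Lemma g_ratio c x m : 0 <= c -> 0 <= x -> (0 < m)%N ->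
  g c x m.+2 <= 4 * c * x * g c x m.+1.
Proof.
move=> c0 x0 mp.
rewrite /g !subSS !subn0.
have hn := pow_ratio mp.
have hn' : ((m.+1) ^ m.+2 <= 4 * m.+2 * m ^ m.+1)%N.
  rewrite expnS -mulnA mulnCA; apply: leq_mul => //; exact: leqnSn.
have hr : ((m.+1)%:R ^+ m.+2 / (m.+2)%:R <= 4 * (m%:R) ^+ m.+1 :> rat).
  rewrite ler_pdivrMr ?ltr0n //.
  by rewrite -!natrX -!natrM ler_nat mulnAC.
set Q := c ^+ m.+1 * x ^+ m / (m.+1)`!%:R.
have Q0 : 0 <= Q by rewrite mulr_ge0 ?exprn_ge0 // ?mulr_ge0 ?exprn_ge0 // invr_ge0 ler0n.
have eL : ((m.+1)%:R * c) ^+ m.+2 / (m.+2)`!%:R * x ^+ m.+1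
    = ((m.+1)%:R ^+ m.+2 / (m.+2)%:R) * (c * x * Q).
  rewrite /Q factS natrM !exprMn !exprS; field.
  apply/andP; split; first by rewrite pnatr_eq0 -lt0n fact_gt0.
  have h : (0:rat) <= m%:R := ler0n _ _. apply: lt0r_neq0; lra.
have eR : 4 * c * x * ((m%:R * c) ^+ m.+1 / (m.+1)`!%:R * x ^+ m)
    = (4 * m%:R ^+ m.+1) * (c * x * Q).
  rewrite /Q !exprMn; field. by rewrite pnatr_eq0 -lt0n fact_gt0.
rewrite eL eR ler_wpM2r //.
by apply: mulr_ge0 => //; apply: mulr_ge0.
Qed.

Lemma Cdown_pow (M k j : nat) : (k <= M)%N -> (j < k)%N ->
  ('C(M - j.+1, k - j.+1))%:R <= ('C(M - 1, k - 1))%:R * (k%:R / M%:R) ^+ j :> rat.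
Proof.
move=> kM; elim: j => [|j IH] jk; first by rewrite expr0 mulr1.
have Mpos : (0 < M)%N by lia.
have h := bin_down_nat kM jk.
have h' : ('C(M - j.+2, k - j.+2))%:R <= (k%:R / M%:R) * ('C(M - j.+1, k - j.+1))%:R :> rat.
  rewrite mulrC mulrA ler_pdivlMr ?ltr0n //.
  by rewrite mulrC -!natrM ler_nat mulnC.
apply: le_trans h' _.
rewrite exprS mulrCA ler_wpM2l //; last exact: IH (ltnW jk).
by rewrite divr_ge0.
Qed.

Lemma step_up (a b : nat) (z : rat) : (0 < a)%N -> b%:R / a%:R <= z ->
  (1 - z) * ('C(a, b))%:R <= ('C(a - 1, b))%:R.
Proof.
move=> apos hz.
have h := mul_bin_down a b.
rewrite -subn1 in h.
case: (leqP b a) => ba; last by rewrite bin_small // mulr0.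
have hr : (a%:R * ('C(a - 1, b))%:R = (a%:R - b%:R) * ('C(a, b))%:R :> rat).
  by rewrite -natrB // -!natrM h.
have ap : (0 : rat) < a%:R by rewrite ltr0n.
have e : ('C(a - 1, b))%:R = (1 - b%:R / a%:R) * ('C(a, b))%:R :> rat.
  apply: (mulfI (lt0r_neq0 ap)) => /=; rewrite hr; field; exact: lt0r_neq0.
rewrite e ler_wpM2r //; lra.
Qed.

Lemma lower1 (M k D e : nat) (z : rat) : (0 < k)%N -> (k + D <= M)%N ->
  z = k%:R / (M - D)%:R -> (e < D)%N ->
  ('C(M - 1, k - 1))%:R * (1 - e%:R * z) <= ('C(M - 1 - e, k - 1))%:R.
Proof.
move=> kp DM ez; elim: e => [|e IH] eD; first by rewrite mul0r subr0 mulr1 subn0.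
have IH' := IH (ltnW eD).
have MDp : (0 : rat) < (M - D)%:R by rewrite ltr0n; lia.
have z0 : 0 <= z by rewrite ez divr_ge0.
have hz : (k - 1)%:R / (M - 1 - e)%:R <= z.
  rewrite ez ler_pdivrMr ?ltr0n; last by lia.
  rewrite mulrAC ler_pdivlMr // -!natrM ler_nat; nia.
have := step_up (a := M - 1 - e) (b := k - 1) _ hz.
have -> : (M - 1 - e - 1 = M - 1 - e.+1)%N by lia.
move=> /(_ ltac:(lia)) h.
apply: le_trans h.
have z1 : z <= 1.
  by rewrite ez ler_pdivrMr // mul1r ler_nat; lia.
set R := ('C(M - 1, k - 1))%:R : rat in IH' *.
set C := ('C(M - 1 - e, k - 1))%:R : rat in IH' *.
have R0 : 0 <= R by rewrite ler0n.
have : (1 - z) * (R * (1 - e%:R * z)) <= (1 - z) * C by rewrite ler_wpM2l //; lra.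
have ee : 0 <= R * (e%:R * (z * z)) by rewrite mulr_ge0 // mulr_ge0 // mulr_ge0.
rewrite -natr1; nra.
Qed.

Lemma lower2 (M k D e : nat) (z : rat) : (0 < k)%N -> (k + D <= M)%N ->
  z = k%:R / (M - D)%:R -> (e <= D)%N ->
  e%:R * ('C(M - 1, k - 1))%:R * (1 - e%:R * z) <=
     ('C(M, k))%:R - ('C(M - e, k))%:R.
Proof.
move=> kp kDM ez; elim: e => [|e IH] eD; first by rewrite !mul0r subn0 subrr.
have IH' := IH (ltnW eD).
have h1 := lower1 kp kDM ez eD.
have pas : 'C(M - e, k) = 'C(M - e.+1, k) + 'C(M - 1 - e, k - 1).
  have -> : (M - e = (M - e.+1).+1)%N by lia.
  have -> : (M - 1 - e = M - e.+1)%N by lia.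
  by clear IH IH' h1 ez kDM; case: k kp => // k' _; rewrite binS subn1.
rewrite pas natrD in IH'.
have z0 : 0 <= z by rewrite ez divr_ge0.
set R := ('C(M - 1, k - 1))%:R : rat in IH' h1 *.
have R0 : 0 <= R by rewrite ler0n.
have ee : 0 <= R * ((e%:R + 1) * z) by rewrite mulr_ge0 // mulr_ge0 // addr_ge0.
rewrite -natr1; nra.
Qed.

Lemma ffact_le_exp w j : (w ^_ j <= w ^ j)%N.
Proof.
elim: j w => [|j IH] w; first by [].
rewrite ffactnS expnS leq_mul //; apply: leq_trans (IH _) _.
by case: (j) => // j0; rewrite leq_exp2r // leq_pred.
Qed.

Lemma bin_le_pow (w j : nat) : ('C(w, j))%:R <= (w%:R ^+ j) / (j`!)%:R :> rat.
Proof.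
rewrite ler_pdivlMr ?ltr0n ?fact_gt0 // -natrX -natrM ler_nat bin_ffact.
exact: ffact_le_exp.
Qed.

Lemma term_bound (w M k j : nat) (c : rat) : (2 <= j)%N -> (j <= k)%N -> (k <= M)%N ->
  0 <= c -> w%:R <= (j - 1)%N%:R * c ->
  ('C(w, j) * 'C(M - j, k - j))%:R <= ('C(M - 1, k - 1))%:R * g c (k%:R / M%:R) j.
Proof.
move=> j2 jk kM c0 hw.
have hC := @Cdown_pow M k (j - 1) kM ltac:(lia).
have e : (j - 1).+1 = j by lia.
rewrite e in hC.
have hB : ('C(w, j))%:R <= ((j - 1)%N%:R * c) ^+ j / (j`!)%:R :> rat.
  apply: le_trans (bin_le_pow w j) _.
  rewrite ler_wpM2r ?invr_ge0 ?ler0n //.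
  by apply: lerXn2r; rewrite ?nnegrE ?ler0n // mulr_ge0 // ler0n.
rewrite natrM /g.
have -> : ('C(M - 1, k - 1))%:R * (((j - 1)%N%:R * c) ^+ j / (j`!)%:R * (k%:R / M%:R) ^+ (j - 1))
   = (((j - 1)%N%:R * c) ^+ j / (j`!)%:R) * (('C(M - 1, k - 1))%:R * (k%:R / M%:R) ^+ (j - 1)) :> rat.
  by rewrite mulrCA.
apply: ler_pM => //; exact: ler0n.
Qed.

Lemma geom (G : nat -> rat) (r : rat) : (forall i, G i.+1 <= r * G i) ->
  forall K, (1 - r) * (\sum_(i < K) G i) <= G 0%N - G K.
Proof.
move=> hG; elim => [|K IH]; first by rewrite big_ord0 mulr0 subrr.
rewrite big_ord_recr /= mulrDr.
have := hG K; lra.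
Qed.

Lemma final_ineq (S c x D z : rat) : 1000 <= S -> 4 * c = 3 * S + 4 ->
  0 <= x -> 5 * S * x <= 1 -> 0 <= z -> 5 * S * z <= 1 ->
  S - 3 <= 4 * D -> 4 * D <= S ->
  c * c * x / 2 < (1 - 4 * c * x) * (D * (1 - D * z)).
Proof.
move=> S1 ec x0 xS z0 zS D1 D2.
set y := c * x.
have c0 : 0 <= c by lra.
have yS : y * S <= (3 * S + 4) / 20.
  have : c * (5 * S * x) <= c * 1 by rewrite ler_wpM2l.
  rewrite /y; lra.
have y1 : y <= 151 / 1000.
  have h : y * S <= 151 / 1000 * S by lra.
  rewrite ler_pM2r in h.
  exact h. lra.
have y0 : 0 <= y by rewrite /y mulr_ge0.
have D0 : 0 <= D by lra.
have Dz : D * z <= 1 / 20.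
  have h : D * (5 * S * z) <= D * 1 by rewrite ler_wpM2l.
  have h3 : D * z * S <= 1 / 20 * S by lra.
  rewrite ler_pM2r in h3. exact h3. lra.
have e1 : c * c * x / 2 = c * y / 2 by rewrite /y; ring.
rewrite e1.
have h1 : c * y <= c * (151 / 1000) by apply: ler_wpM2l.
have h2 : (396 / 1000) * (D * (95 / 100)) <= (1 - 4 * y) * (D * (1 - D * z)).
  apply: ler_pM; try lra.
  apply: ler_pM; lra.
have -> : 4 * c * x = 4 * y by rewrite /y; ring.
clear -h1 h2 ec D1 S1.
lra.
Qed.

Lemma numeric (s k n p : nat) (w : nat -> nat) :
  (1000 <= s)%N -> (0 < k)%N -> (6 * (s + 1) * k < n)%N -> p = ((3 * s + 2) %/ 4)%N ->
  w 1%N = 0%N -> (forall j, (2 <= j)%N -> (4 * w j <= 3 * (s + 1) * (j - 1) + 4)%N) ->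
  (\sum_(j < k) 'C(w j.+1, j.+1) * 'C(n - p - j.+1, k - j.+1) < 'C(n - p, k) - 'C(n - s, k))%N.
Proof.
move=> s1 kp hn ep w1 hw.
have ps : (p <= s)%N by rewrite ep; lia.
have ens : (n - s = (n - p) - (s - p))%N by lia.
rewrite ens.
set M := (n - p)%N. set D := (s - p)%N.
have kDM : (k + D <= M)%N by rewrite /M /D; nia.
have MD5 : (5 * (s + 1) * k <= M - D)%N by rewrite /M /D; nia.
have M5 : (5 * (s + 1) * k <= M)%N by lia.
have kM : (k <= M)%N by lia.
have D1 : (s <= 4 * D + 2)%N by rewrite /D ep; lia.
have D2 : (4 * D <= s + 1)%N by rewrite /D ep; lia.
case: k kp hn kDM MD5 M5 kM => // k' _ hn kDM MD5 M5 kM.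
rewrite big_ord_recl /= w1 bin0n /= mul0n add0n.
rewrite -(ltr_nat rat) natr_sum natrB; last exact: leq_bin2l (leq_subr _ _).
set R := ('C(M - 1, k'.+1 - 1))%:R : rat.
have Rpos : 0 < R by rewrite ltr0n bin_gt0; lia.
set x := (k'.+1)%:R / M%:R : rat.
set c := (3 * (s + 1) + 4)%N%:R / 4 : rat.
set z := (k'.+1)%:R / (M - D)%N%:R : rat.
have c0 : 0 <= c by rewrite /c divr_ge0.
have x0 : 0 <= x by rewrite /x divr_ge0.
have hA : \sum_(i < k') ('C(w (bump 0 i).+1, (bump 0 i).+1) * 'C(M - (bump 0 i).+1, k'.+1 - (bump 0 i).+1))%:R
    <= \sum_(i < k') R * g c x i.+2.
  apply: ler_sum => i _.
  rewrite /bump /= add1n.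
  apply: term_bound => //; first by have := ltn_ord i; lia.
  have := hw i.+2 isT.
  move=> hh.
  have : ((4 * w i.+2)%N%:R <= ((i.+2 - 1) * (3 * (s + 1) + 4))%N%:R :> rat) by rewrite ler_nat; nia.
  rewrite /c !natrM; lra.
set r := 4 * c * x.
have hG : forall i, g c x i.+3 <= r * g c x i.+2.
  by move=> i; apply: g_ratio.
have hgeo := geom hG k'.
have gk0 : 0 <= g c x k'.+2 by apply: g_ge0.
have G0 : g c x 2 = c * c * x / 2.
  by rewrite /g (_ : (2 - 1 = 1)%N) // (_ : 2`! = 2)%N // expr1 mul1r; field.
have hfin := @final_ineq (s + 1)%N%:R c x D%:R z.
have Mpos : (0 : rat) < M%:R by rewrite ltr0n; clear -kM; lia.
have MDpos : (0 : rat) < (M - D)%N%:R by rewrite ltr0n; clear -kDM; lia.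
have fx : 5 * (s + 1)%N%:R * x <= 1.
  rewrite /x mulrA ler_pdivrMr // mul1r -!natrM ler_nat; clear -M5; lia.
have fc : 4 * c = 3 * (s + 1)%N%:R + 4 by rewrite /c -natrM; field.
have h1 : c * c * x / 2 < (1 - 4 * c * x) * (D%:R * (1 - D%:R * z)).
  apply: hfin.
  - by rewrite ler_nat; clear -s1; lia.
  - exact: fc.
  - exact: x0.
  - exact: fx.
  - by rewrite /z divr_ge0.
  - rewrite /z mulrA ler_pdivrMr // mul1r -!natrM ler_nat; clear -MD5; lia.
  - rewrite -natrM lerBlDr -natrD ler_nat; clear -D1; lia.
  - rewrite -natrM ler_nat; clear -D2; lia.
have hlow := @lower2 M k'.+1 D D z isT kDM erefl (leqnn _).
rewrite -/R in hlow.
set A := \sum_(i < k') _ in hA *.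
rewrite -mulr_sumr in hA.
set B := \sum_(i < k') g c x i.+2 in hA hgeo.

rewrite G0 in hgeo.
set Q := D%:R * (1 - D%:R * z) in h1.
have Q0 : 0 <= c * c * x / 2 by rewrite divr_ge0 // mulr_ge0 // mulr_ge0.
have r0 : 0 <= r by rewrite /r mulr_ge0 // mulr_ge0.
have gk0' : 0 <= r * g c x k'.+2 by rewrite mulr_ge0.
have r1 : 0 < 1 - r.
  have r' : r = (3 * (s + 1)%N%:R + 4) * x by rewrite /r -fc.
  have hx : 5 * 3 * x <= 5 * (s + 1)%N%:R * x.
    apply: ler_wpM2r => //; apply: ler_wpM2l => //.
    rewrite ler_nat; clear -s1; lia.
  rewrite r'; clear -hx fx x0; lra.
have e1 : (1 - r) * A <= (1 - r) * (R * B) by apply: ler_wpM2l => //; exact: ltW.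
have e2 : R * ((1 - r) * B) <= R * (c * c * x / 2).
  apply: ler_wpM2l; [exact: ltW | clear -hgeo gk0; lra].
have e3 : R * (c * c * x / 2) < R * ((1 - r) * Q) by rewrite ltr_pM2l.
have e4 : (1 - r) * A < (1 - r) * (R * Q).
  clear -e1 e2 e3; rewrite /r in e1 e2 e3 *; lra.
rewrite ltr_pM2l // in e4.
apply: lt_le_trans e4 _.
by rewrite /Q mulrA (mulrC R).
Qed.

End Numeric.

Lemma card_ltm n b : #|[set x : 'I_n | (x < b)%N]| = minn b n.
Proof.
case: (leqP b n) => bn.
  have -> : [set x : 'I_n | (x < b)%N] = widen_ord bn @: [set: 'I_b].
    apply/setP => x; rewrite inE; apply/idP/imsetP => [xb|[y _ ->]]; last exact: ltn_ord y.
    by exists (Ordinal xb) => //; apply: val_inj.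
  have inj : injective (widen_ord bn) by move=> u v /(congr1 val) /= h; apply: val_inj.
  rewrite (card_imset _ inj) cardsT card_ord; lia.
have -> : [set x : 'I_n | (x < b)%N] = setT.
  by apply/setP => x; rewrite !inE (leq_trans (ltn_ord x)) // ltnW.
by rewrite cardsT card_ord; lia.
Qed.

Lemma card_W n a b : (a <= b)%N -> (#|[set x : 'I_n | (a <= x) && (x < b)]| <= b - a)%N.
Proof.
move=> ab.
have e : [set x : 'I_n | (a <= x) && (x < b)] = [set x : 'I_n | (x < b)%N] :\: [set x : 'I_n | (x < a)%N].
  by apply/setP => x; rewrite !inE -leqNgt andbC.
rewrite e cardsDS ?card_ltm; first by lia.
by apply/subsetP => x; rewrite !inE => h; apply: leq_trans h ab.
Qed.
Lemma card_bigcup_leq (T I : finType) (P : pred I) (F : I -> {set T}) :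
  #|\bigcup_(i | P i) F i| <= \sum_(i | P i) #|F i|.
Proof.
elim/big_rec2: _ => [|i S n _ IH]; first by rewrite cards0.
apply: leq_trans (leq_card_setU _ _) _; exact: leq_add.
Qed.

Lemma exists_sub (T : finType) (S : {set T}) j : j <= #|S| ->
  exists B : {set T}, [/\ B \subset S & #|B| = j].
Proof.
move=> hj.
have : 0 < #|[set B : {set T} | B \subset S & #|B| == j]|.
  by rewrite cards_draws bin_gt0.
case/card_gt0P => B; rewrite inE => /andP[h1 /eqP h2]; by exists B.
Qed.

Lemma count_E (T : finType) (U W : {set T}) k j : W \subset U ->
  #|[set A : {set T} | [&& A \subset U, #|A| == k & j <= #|A :&: W|]]|
    <= 'C(#|W|, j) * 'C(#|U| - j, k - j).
Proof.
move=> WU.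
pose Bs := [set B : {set T} | B \subset W & #|B| == j].
pose Y (B : {set T}) := [set A : {set T} | [&& A \subset U, #|A| == k & B \subset A]].
have sub : [set A : {set T} | [&& A \subset U, #|A| == k & j <= #|A :&: W|]]
   \subset \bigcup_(B in Bs) Y B.
  apply/subsetP => A; rewrite inE => /and3P[AU Ak hj].
  have [B [BS Bj]] := exists_sub hj.
  apply/bigcupP; exists B.
    by rewrite inE Bj eqxx andbT (subset_trans BS) // subsetIr.
  by rewrite inE AU Ak (subset_trans BS) // subsetIl.
apply: leq_trans (subset_leq_card sub) _.
apply: leq_trans (card_bigcup_leq _ _) _.
rewrite -(cards_draws W j) -sum_nat_const.
apply: leq_sum => B; rewrite inE => /andP[BW /eqP Bj].
have BU : B \subset U := subset_trans BW WU.
have inj : {in Y B &, injective (fun A => A :\: B)}.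
  move=> A1 A2; rewrite !inE => /and3P[_ _ h1] /and3P[_ _ h2] e.
  by rewrite -(setID A1 B) -(setID A2 B) (setIidPr h1) (setIidPr h2) e.
rewrite -(card_in_imset inj).
have -> : 'C(#|U| - j, k - j) = #|[set C : {set T} | C \subset U :\: B & #|C| == k - j]|.
  by rewrite cards_draws cardsD (setIidPr BU) Bj.
apply: subset_leq_card; apply/subsetP => C /imsetP[A]; rewrite /Y inE => /and3P[AU /eqP Ak BA] ->.
rewrite inE setSD //= cardsD (setIidPr BA) Ak Bj eqxx.
done.
Qed.


Section Bad.
Local Open Scope ring_scope.
Lemma frac_lt (a b c d : nat) : (0 < b)%N -> (0 < d)%N ->
  (a%:R / b%:R < c%:R / d%:R :> rat) -> (a * d < c * b)%N.
Proof.
move=> b0 d0.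
rewrite ltr_pdivrMr ?ltr0n // mulrAC ltr_pdivlMr ?ltr0n //.
by rewrite -!natrM ltr_nat.
Qed.


Lemma bad_elem (s n : nat) (F : {set {set 'I_n}}) (A : {set 'I_n}) :
  (0 < n)%N -> A \in F ->
  ((4%:R / (3 * (s + 1))%:R : rat) < beta F)%O ->
  exists l : 'I_n, (4 * l.+1 < 3 * (s + 1) * #|[set i in A | (i <= l)%N]|)%N.
Proof.
move=> n0 AF hb.
have h1 : beta F <= maxratio A by apply: bigmin_le_cond.
have h2 := lt_le_trans hb h1.
case: (boolP [exists l : 'I_n, 4%:R / (3 * (s + 1))%:R < Defs.ratio A l]).
  case/existsP => l hl; exists l.
  move: hl; rewrite /Defs.ratio => /frac_lt; rewrite muln_gt0 addn1 /= => /(_ isT isT) h.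
  by rewrite [X in (_ < X)%N]mulnC.
move=> /existsPn hn.
have : maxratio A <= 4%:R / (3 * (s + 1))%:R.
  apply: bigmax_le; first by rewrite divr_ge0.
  by move=> l _; have := hn l; rewrite leNgt.
by rewrite leNgt h2.
Qed.
End Bad.

Theorem lemma3 (s k n : nat) (F : {set {set 'I_n}}) :
  (0 < s)%N -> (0 < k)%N -> (2 * 10 ^ 6 < s)%N ->
  (* n = ceil (3 e (s+1) k) *)
  Rlt (Rminus (INR n) (INR 1)) (Rmult (Rmult (Rmult (INR 3) (exp (INR 1))) (INR (s + 1))) (INR k)) /\
  Rle (Rmult (Rmult (Rmult (INR 3) (exp (INR 1))) (INR (s + 1))) (INR k)) (INR n) ->
  (forall A, A \in F -> #|A| = k) ->
  F != set0 ->
  shifted F ->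
  ((4%:R / (3 * (s + 1))%:R : rat) < beta F)%O ->
  (#|F| < 'C(n, k) - 'C(n - s, k))%N.
Proof.
move=> s0 k0 s2 [_ Hn] Hk F0 _ Hb.
have hn : (6 * (s + 1) * k < n)%N by apply: n_big; [exact: Hn | exact: k0].
have s1 : (1000 <= s)%N.
  apply: leq_trans (ltnW s2).
  have e3 : (10 ^ 3 = 1000)%N by [].
  rewrite -e3; apply: (@leq_trans (10 ^ 6)); first by rewrite leq_exp2l.
  by rewrite leq_pmull.
have n0 : (0 < n)%N by clear -hn; lia.
have sn : (s <= n)%N by clear -hn k0; nia.
pose p := ((3 * s + 2) %/ 4)%N.
have ps : (p <= s)%N by rewrite /p; clear; lia.
pose P := [set x : 'I_n | (x < p)%N].
pose U := ~: P.
pose q j := ((3 * (s + 1) * j - 1) %/ 4)%N.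
pose W j := [set x : 'I_n | (p <= x) && (x < q j)].
pose X := [set A : {set 'I_n} | A \subset U].
have cP : #|P| = p by rewrite card_ltm; clear -ps sn; lia.
have cU : #|U| = (n - p)%N by rewrite cardsCs setCK card_ord cP.
have WU : forall j, W j \subset U.
  by move=> j; apply/subsetP => x; rewrite !inE -leqNgt => /andP[].
have h1 : (#|F :\: X| <= 'C(n, k) - 'C(n - p, k))%N.
  pose K := [set A : {set 'I_n} | #|A| == k].
  pose KU := [set A : {set 'I_n} | A \subset U & #|A| == k].
  have sub : F :\: X \subset K :\: KU.
    apply/subsetP => A; rewrite !inE => /andP[AX AF].
    by rewrite Hk // eqxx andbT (negbTE AX).
  apply: leq_trans (subset_leq_card sub) _.
  rewrite cardsDS; last by apply/subsetP => A; rewrite !inE => /andP[].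
  by rewrite card_draws cards_draws cU card_ord.
pose E j := [set A : {set 'I_n} | [&& A \subset U, #|A| == k & (j <= #|A :&: W j|)%N]].
have h2 : (#|F :&: X| <= \sum_(j < k) 'C(#|W j.+1|, j.+1) * 'C(n - p - j.+1, k - j.+1))%N.
  have sub : F :&: X \subset \bigcup_(j < k) E j.+1.
    apply/subsetP => A; rewrite !inE => /andP[AF AU].
    have [l hl] := bad_elem n0 AF Hb.
    set jj := #|[set i in A | (i <= l)%N]| in hl.
    have jj0 : (0 < jj)%N by clear -hl; nia.
    have jjk : (jj <= k)%N.
      by rewrite -(Hk A AF); apply: subset_leq_card; apply/subsetP => i; rewrite inE => /andP[].
    apply/bigcupP; exists (Ordinal (n:=k) (m:=jj.-1) ltac:(clear -jj0 jjk; lia)) => //=.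
    have -> : jj.-1.+1 = jj by clear -jj0; lia.
    rewrite inE AU Hk // eqxx /=.
    rewrite -{1}/jj; apply: subset_leq_card; apply/subsetP => i; rewrite !inE => /andP[iA il].
    rewrite iA /=.
    have iU : i \in U by apply: (subsetP AU).
    move: iU; rewrite !inE -leqNgt => -> /=.
    rewrite /q; clear -il hl.
    set m := (3 * (s + 1) * jj)%N in hl *.
    lia.
  apply: leq_trans (subset_leq_card sub) _.
  apply: leq_trans (card_bigcup_leq _ _) _.
  apply: leq_sum => j _.
  by rewrite -cU; apply: count_E.
have h3 := @numeric s k n p (fun j => #|W j|) s1 k0 hn erefl.
have h3' : (\sum_(j < k) 'C(#|W j.+1|, j.+1) * 'C(n - p - j.+1, k - j.+1)
              < 'C(n - p, k) - 'C(n - s, k))%N.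
  apply: h3.
  - apply/eqP; rewrite -leqn0; apply: leq_trans (card_W _ _) _; first by rewrite /q /p; clear; lia.
    by rewrite /q /p; clear; lia.
  - move=> j j2; apply: leq_trans (leq_mul (leqnn 4) (card_W _ _)) _.
      rewrite /q /p; clear -j2.
      have : (3 * s + 2 <= 3 * (s + 1) * j - 1)%N by nia.
      lia.
    rewrite /q /p; clear -j2.
    have e : (3 * (s + 1) * (j - 1) = 3 * (s + 1) * j - 3 * (s + 1))%N by rewrite mulnBr muln1.
    rewrite e.
    have : (3 * (s + 1) <= 3 * (s + 1) * j)%N by nia.
    set m := (3 * (s + 1) * j)%N.
    lia.
have cFX := cardsID X F.
have b1 : ('C(n - s, k) <= 'C(n - p, k))%N by apply: leq_bin2l; clear -ps; lia.
have b2 : ('C(n - p, k) <= 'C(n, k))%N by apply: leq_bin2l; clear; lia.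
rewrite -cFX.
move: h1 h2 h3' b1 b2.
set S := \sum_(j < k) _.
set a := #|F :&: X|. set b := #|F :\: X|.
set c1 := 'C(n, k). set c2 := 'C(n - p, k). set c3 := 'C(n - s, k).
clear; lia.
Qed.
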